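(* Let $F,G$ be absolutely continuous distribution functions with densities $f,g$. Let $X_1,\ldots,X_{n_1}$ be independent random variables with $P(X_i\leq x)=[F(x)]^{\alpha_i}$ for $i=1,\ldots,p_1$ and $P(X_i\leq x)=[G(x)]^{\alpha_i}$ for $i=p_1+1,\ldots,n_1$, and let $Y_1,\ldots,Y_{n_2}$ be independent random variables with $P(Y_i\leq x)=[F(x)]^{\beta_i}$ for $i=1,\ldots,p_2$ and $P(Y_i\leq x)=[G(x)]^{\beta_i}$ for $i=p_2+1,\ldots,n_2$, all $\alpha_i,\beta_i>0$. If $\sum_{i=1}^{p_1}\alpha_i>\sum_{i=1}^{p_2}\beta_i$ and $\sum_{i=p_1+1}^{n_1}\alpha_i>\sum_{i=p_2+1}^{n_2}\beta_i$, then $X_{n_1:n_1}\geq_{rh}Y_{n_2:n_2}$.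
   Context: $X_{n:n}=\max(X_1,\ldots,X_n)$. For $X\sim F_X$, $Y\sim F_Y$, $Y\leq_{rh}X$ (equivalently $X\geq_{rh}Y$; reversed hazard rate order) means $F_X(x)/F_Y(x)$ is increasing in $x$ over the union of the supports. *)

(* Defs.v *)
From HB Require Import structures.
From mathcomp Require Import all_boot all_order all_algebra.
From mathcomp Require Import all_classical all_reals all_analysis.
Set Implicit Arguments. Unset Strict Implicit. Unset Printing Implicit Defensive.
Import Order.TTheory GRing.Theory Num.Theory.
Import numFieldNormedType.Exports.
Local Open Scope classical_set_scope.
Local Open Scope ring_scope.

Definition abs_cont_df (R : realType) (F f : R -> R) : Prop :=
  [/\ (forall x, 0 <= f x),
      measurable_fun [set: R] f,
      (\int[lebesgue_measure]_x (f x)%:E = 1)%E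
    & forall x, (F x)%:E = (\int[lebesgue_measure]_(t in `]-oo, x]) (f t)%:E)%E].

Definition mutually_independent (R : realType) d (T : measurableType d)
  (P : probability T R) (n : nat) (X : 'I_n -> {RV P >-> R}) : Prop :=
  forall B : 'I_n -> set R, (forall i, measurable (B i)) ->
    P (\bigcap_(i in [set: 'I_n]) (X i @^-1` B i)) =
    (\prod_(i < n) P (X i @^-1` B i))%E.

(* X_{n:n} = max(X_1,...,X_n) (valued in \bar R; -oo for the empty family) *)
Definition maxRV (R : realType) (T : Type) (n : nat) (X : 'I_n -> T -> R)
  (w : T) : \bar R :=
  (\big[maxe/-oo]_(i < n) (X i w)%:E)%E.

Definition df_of (R : realType) d (T : measurableType d) (P : probability T R)
  (M : T -> \bar R) (x : R) : R :=
  fine (P [set w | (M w <= x%:E)%E]).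

Definition ratio_ext (R : realType) (a b : R) : \bar R :=
  if b == 0 then +oo%E else (a / b)%:E.

(* Y <=_rh X (FY, FX the distribution functions): FX/FY is increasing
   over the union of the supports, i.e. over {x | FX x > 0 or FY x > 0}. *)
Definition rh_le (R : realType) (FY FX : R -> R) : Prop :=
  forall x y, x <= y ->
    (0 < FX x \/ 0 < FY x) -> (0 < FX y \/ 0 < FY y) ->
    (ratio_ext (FX x) (FY x) <= ratio_ext (FX y) (FY y))%E.

(* Main.v *)
Require Import Defs.
From HB Require Import structures.
From mathcomp Require Import all_boot all_order all_algebra.
From mathcomp Require Import all_classical all_reals all_analysis.
Import Order.TTheory GRing.Theory Num.Theory.
Import numFieldNormedType.Exports.
Local Open Scope classical_set_scope.
Local Open Scope ring_scope.

Lemma acdf_ge0 (R : realType) (F f : R -> R) : abs_cont_df F f -> forall x, 0 <= F x.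
Proof.
case=> f0 mf _ hF x; rewrite -lee_fin hF; apply: integral_ge0 => t _.
by rewrite lee_fin.
Qed.

Lemma acdf_mono (R : realType) (F f : R -> R) : abs_cont_df F f ->
  forall x y, x <= y -> F x <= F y.
Proof.
case=> f0 mf _ hF x y xy; rewrite -lee_fin !hF.
apply: ge0_subset_integral => //.
- apply/measurable_realfun.measurable_EFinP; exact: measurable_funS mf.
- by move=> t _; rewrite lee_fin.
- move=> t /=; rewrite !in_itv /= => tx; exact: le_trans tx xy.
Qed.
Lemma powRD' (R : realType) (a r s : R) : 0 <= r -> 0 <= s ->
  a `^ (r + s) = a `^ r * a `^ s.
Proof.
move=> r0 s0; have [rs|rs] := eqVneq (r + s) 0.
  have r00 : r = 0 by apply/le_anti; rewrite r0 andbT -rs lerDl.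
  move: rs; rewrite r00 add0r => ->; by rewrite !powRr0 mulr1.
by apply: powRD; rewrite (negbTE rs).
Qed.

Lemma powR_sum (R : realType) (a : R) (I : Type) (r : seq I) (P : pred I)
  (e : I -> R) : (forall i, 0 <= e i) ->
  \prod_(i <- r | P i) a `^ e i = a `^ (\sum_(i <- r | P i) e i).
Proof.
move=> he; elim: r => [|i r IH]; first by rewrite !big_nil powRr0.
rewrite !big_cons; case: (P i) => //.
by rewrite IH powRD' // sumr_ge0.
Qed.

Lemma df_max (R : realType) d (T : measurableType d) (P : probability T R)
  (n p : nat) (a : 'I_n -> R) (ha : forall i, 0 < a i)
  (Z : 'I_n -> {RV P >-> R}) (hind : mutually_independent Z)
  (F G : R -> R)
  (hd : forall (i : 'I_n) (x : R), P [set w | Z i w <= x] =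
           ((if (i < p)%N then F x else G x) `^ a i)%:E) (x : R) :
  df_of P (maxRV (fun i => Z i)) x =
  F x `^ (\sum_(i < n | (i < p)%N) a i) * G x `^ (\sum_(i < n | (p <= i)%N) a i).
Proof.
rewrite /df_of.
have -> : [set w | (maxRV (fun i => Z i) w <= x%:E)%E] =
    \bigcap_(i in [set: 'I_n]) (Z i @^-1` `]-oo, x]).
  apply/seteqP; split => w /=.
    move=> hw i _ /=; rewrite in_itv /= -lee_fin.
    exact: le_trans (le_bigmax _ (fun i => (Z i w)%:E) i) hw.
  move=> hw; rewrite /maxRV; apply: bigmax_le; first exact: leNye.
  move=> i _.
  by have := hw i I; rewrite /= in_itv /= lee_fin.
rewrite hind; last by move=> i; exact: measurable_itv.
have -> : (\prod_(i < n) P (Z i @^-1` `]-oo, x]) =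
    \prod_(i < n) ((if (i < p)%N then F x else G x) `^ a i)%:E)%E.
  by apply: eq_bigr => i _; rewrite -hd.

rewrite prodEFin /= (bigID (fun i : 'I_n => (i < p)%N)) /=.
rewrite (eq_bigr (fun i => F x `^ a i)); last by move=> i ->.
rewrite [X in _ * X](eq_bigr (fun i => G x `^ a i)); last by move=> i /negbTE ->.
rewrite !powR_sum; try by move=> i; exact: ltW.
congr (_ * _ `^ _); apply: eq_bigl => i /=; by rewrite -leqNgt.
Qed.
Lemma rh_main (R : realType) (F G : R -> R)
  (F0 : forall x, 0 <= F x) (G0 : forall x, 0 <= G x)
  (Fm : forall x y, x <= y -> F x <= F y) (Gm : forall x y, x <= y -> G x <= G y)
  (A1 A2 B1 B2 : R) (hB1 : 0 <= B1) (hB2 : 0 <= B2) (h1 : B1 < A1) (h2 : B2 < A2) :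
  rh_le (fun x => F x `^ B1 * G x `^ B2) (fun x => F x `^ A1 * G x `^ A2).
Proof.
move=> x y xy /= hx hy; rewrite /ratio_ext /=.
set FYx := F x `^ B1 * G x `^ B2; set FYy := F y `^ B1 * G y `^ B2.
set FXx := F x `^ A1 * G x `^ A2; set FXy := F y `^ A1 * G y `^ A2.
have FYx0 : 0 <= FYx by rewrite mulr_ge0 ?powR_ge0.
have FYy0 : 0 <= FYy by rewrite mulr_ge0 ?powR_ge0.
have FXy0 : 0 <= FXy by rewrite mulr_ge0 ?powR_ge0.
have pos : forall z, 0 < F z `^ A1 * G z `^ A2 -> 0 < F z /\ 0 < G z.
  move=> z; rewrite lt_neqAle mulr_ge0 ?powR_ge0 // andbT eq_sym mulf_eq0 !powR_eq0.
  rewrite negb_or !negb_and !negbK (gt_eqF (le_lt_trans hB1 h1)) (gt_eqF (le_lt_trans hB2 h2)) !orbF.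
  by case/andP => a b; split; rewrite lt_neqAle eq_sym ?a ?b ?F0 ?G0.
case: ifPn => [FYx0e|FYxn0].
  have FYx00 : FYx = 0 by apply/eqP.
  exfalso; case: hx => [hx|]; last by rewrite -/FYx FYx00 ltxx.
  have [Fx Gx] := pos _ hx.
  by move: FYx00; apply/eqP; rewrite gt_eqF // mulr_gt0 ?powR_gt0.
case: ifPn => [_|FYyn0]; first by rewrite leey.
rewrite lee_fin.
have [FXx00|FXxn0] := eqVneq FXx 0.
  by rewrite FXx00 mul0r divr_ge0.
have [Fx Gx] : 0 < F x /\ 0 < G x.
  by apply: pos; rewrite lt_neqAle eq_sym FXxn0 mulr_ge0 ?powR_ge0.
have Fy : 0 < F y by apply: lt_le_trans Fx (Fm _ _ xy).
have Gy : 0 < G y by apply: lt_le_trans Gx (Gm _ _ xy).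
have hsplit : forall z, 0 < F z -> 0 < G z ->
    (F z `^ A1 * G z `^ A2) / (F z `^ B1 * G z `^ B2) =
    F z `^ (A1 - B1) * G z `^ (A2 - B2).
  move=> z Fz Gz.
  have d1 : 0 <= A1 - B1 by rewrite subr_ge0 ltW.
  have d2 : 0 <= A2 - B2 by rewrite subr_ge0 ltW.
  rewrite -{1}(subrK B1 A1) -{1}(subrK B2 A2) (@powRD' _ (F z) _ _ d1 hB1) (@powRD' _ (G z) _ _ d2 hB2).
  by rewrite mulrACA mulfK // mulf_neq0 // gt_eqF // powR_gt0.
rewrite /FXx /FYx /FXy /FYy !hsplit //.
have d1 : 0 <= A1 - B1 by rewrite subr_ge0 ltW.
have d2 : 0 <= A2 - B2 by rewrite subr_ge0 ltW.
apply: ler_pM; rewrite ?powR_ge0 //; apply: ge0_ler_powR => //;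
  rewrite ?nnegrE ?F0 ?G0 //; by [apply: Fm | apply: Gm].
Qed.
Theorem theorem4 (R : realType)
  (d1 : measure_display) (T1 : measurableType d1) (P1 : probability T1 R)
  (d2 : measure_display) (T2 : measurableType d2) (P2 : probability T2 R)
  (F G f g : R -> R) (hF : abs_cont_df F f) (hG : abs_cont_df G g)
  (n1 p1 n2 p2 : nat) (hp1 : (p1 <= n1)%N) (hp2 : (p2 <= n2)%N)
  (alpha : 'I_n1 -> R) (beta : 'I_n2 -> R)
  (halpha : forall i, 0 < alpha i) (hbeta : forall i, 0 < beta i)
  (X : 'I_n1 -> {RV P1 >-> R}) (Y : 'I_n2 -> {RV P2 >-> R})
  (hXind : mutually_independent X) (hYind : mutually_independent Y)
  (hXd : forall (i : 'I_n1) (x : R), P1 [set w | X i w <= x] =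
           ((if (i < p1)%N then F x else G x) `^ alpha i)%:E)
  (hYd : forall (i : 'I_n2) (x : R), P2 [set w | Y i w <= x] =
           ((if (i < p2)%N then F x else G x) `^ beta i)%:E)
  (hsum1 : \sum_(i < n1 | (i < p1)%N) alpha i > \sum_(i < n2 | (i < p2)%N) beta i)
  (hsum2 : \sum_(i < n1 | (p1 <= i)%N) alpha i > \sum_(i < n2 | (p2 <= i)%N) beta i) :
  rh_le (df_of P2 (maxRV (fun i => Y i))) (df_of P1 (maxRV (fun i => X i))).
Proof.
have FX := funext (@df_max _ _ _ _ _ _ _ halpha _ hXind _ _ hXd).
have FY := funext (@df_max _ _ _ _ _ _ _ hbeta _ hYind _ _ hYd).
rewrite FX FY.
apply: rh_main => //.
- exact: (@acdf_ge0 _ _ _ hF).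
- exact: (@acdf_ge0 _ _ _ hG).
- exact: (@acdf_mono _ _ _ hF).
- exact: (@acdf_mono _ _ _ hG).
- by apply: sumr_ge0 => i _; exact: ltW.
- by apply: sumr_ge0 => i _; exact: ltW.
Qed.
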